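(* Let $(\mathbf{A},E,D)$ be a scheme on $P$ compute nodes with gradient dimension $d\ge 1$, and let $s\ge 0$ be an integer. If $(\mathbf{A},E,D)$ tolerates $s$ adversarial nodes, then its redundancy ratio satisfies $r\ge 2s+1$, i.e. $\|\mathbf{A}\|_0\ge (2s+1)P$.
   Context: Fix integers $P\ge 1$ (number of compute nodes) and $d\ge 1$. A scheme is a triple $(\mathbf{A},E,D)$ where $\mathbf{A}\in\{0,1\}^{P\times P}$ is an allocation matrix ($\mathbf{A}_{j,k}=1$ means node $j$ is assigned gradient $k$), $E=(E_1,\dots,E_P)$ with each $E_j:\mathbb{R}^{d\times P}\to\mathbb{R}^d$ an arbitrary function (encoder of node $j$), and $D:\mathbb{R}^{d\times P}\to\mathbb{R}^d$ an arbitrary function (decoder). For $\mathbf{G}=[\mathbf{g}_1,\dots,\mathbf{g}_P]\in\mathbb{R}^{d\times P}$, let $\mathbf{Y}_j=(\mathbf{1}_d\mathbf{A}_{j,\cdot})\odot\mathbf{G}$ (the $d\times P$ matrix whose $k$-th column is $\mathbf{g}_k$ if $\mathbf{A}_{j,k}=1$ and $\mathbf{0}_d$ otherwise; $\odot$ is the entrywise product, $\mathbf{1}_d$ the all-ones column vector), $\mathbf{z}_j=E_j(\mathbf{Y}_j)$, and $\mathbf{Z}^{\mathbf{A},E,\mathbf{G}}=[\mathbf{z}_1,\dots,\mathbf{z}_P]\in\mathbb{R}^{d\times P}$. The scheme tolerates $s$ adversarial nodes if for every $\mathbf{G}\in\mathbb{R}^{d\times P}$ and every $\mathbf{N}\in\mathbb{R}^{d\times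 P}$ with at most $s$ nonzero columns, $D(\mathbf{Z}^{\mathbf{A},E,\mathbf{G}}+\mathbf{N})=\mathbf{G}\mathbf{1}_P$. The redundancy ratio is $r=\frac1P\|\mathbf{A}\|_0$, where $\|\mathbf{A}\|_0$ is the number of nonzero entries of $\mathbf{A}$. *)

(* Defs.v *)
From mathcomp Require Import all_boot.
From Stdlib Require Import Reals.
Set Implicit Arguments. Unset Strict Implicit. Unset Printing Implicit Defensive.

Definition rmat (d P : nat) := 'I_d -> 'I_P -> R.
Definition rvec (d : nat) := 'I_d -> R.

(* Allocation matrix A in {0,1}^{P x P}: A j k = true iff node j holds gradient k. *)
Definition alloc (P : nat) := 'I_P -> 'I_P -> bool.

Definition Ymat d P (A : alloc P) (G : rmat d P) (j : 'I_P) : rmat d P :=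
  fun i k => if A j k then G i k else 0%R.

Definition Zmat d P (A : alloc P) (E : 'I_P -> rmat d P -> rvec d) (G : rmat d P)
  : rmat d P := fun i j => E j (Ymat A G j) i.

Definition colsum d P (G : rmat d P) : rvec d :=
  fun i => \big[Rplus/0%R]_(k < P) G i k.

Definition at_most_cols d P (s : nat) (N : rmat d P) : Prop :=
  exists S : {set 'I_P}, #|S| <= s /\ forall k, k \notin S -> forall i, N i k = 0%R.

Definition madd d P (M N : rmat d P) : rmat d P := fun i k => (M i k + N i k)%R.

Definition tolerates d P (A : alloc P) (E : 'I_P -> rmat d P -> rvec d)
  (D : rmat d P -> rvec d) (s : nat) : Prop :=
  forall (G N : rmat d P), at_most_cols s N ->
    D (madd (Zmat A E G) N) = colsum G.

Definition nnz P (A : alloc P) : nat := #|[set jk : 'I_P * 'I_P | A jk.1 jk.2]|.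

(* Main.v *)
Require Import Defs.
From mathcomp Require Import all_boot.
From Stdlib Require Import Reals.
From HB Require Import structures.
From Stdlib Require Import FunctionalExtensionality Lia.
From mathcomp Require Import zify.

HB.instance Definition _ := Monoid.isComLaw.Build R 0%R Rplus (fun a b c => esym (Rplus_assoc a b c)) Rplus_comm Rplus_0_l.

Lemma subset_of_card (T : finType) (n : nat) (A : {set T}) :
  n <= #|A| -> exists B : {set T}, B \subset A /\ #|B| = n.
Proof.
elim: n => [|n IH] H.
  by exists set0; rewrite sub0set cards0.
have [B [BA cB]] := IH (ltnW H).
have : 0 < #|A :\: B| by rewrite cardsD (setIidPr BA) cB subn_gt0.
move/card_gt0P=> [x]; rewrite in_setD => /andP [xB xA].
exists (x |: B); split.
  by rewrite subUset sub1set xA BA.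
by rewrite cardsU1 xB cB.
Qed.

Lemma arith_aux (m s : nat) : m < 2 * s + 1 -> m - minn s m <= s.
Proof. move=> H; lia. Qed.

Lemma column_bound (P d s : nat) (hd : 1 <= d)
  (A : alloc P) (E : 'I_P -> rmat d P -> rvec d) (D : rmat d P -> rvec d) (k : 'I_P) :
  tolerates A E D s -> 2 * s + 1 <= #|[set j | A j k]|.
Proof.
move=> Htol.
rewrite leqNgt; apply/negP => Hlt.
set Sk := [set j | A j k].
have [S1 [S1S cS1]] := @subset_of_card _ (minn s #|Sk|) Sk (geq_minr _ _).
pose i0 : 'I_d := Ordinal hd.
pose G0 : rmat d P := fun _ _ => 0%R.
pose G1 : rmat d P := fun i k' => if (k' == k) && (i == i0) then 1%R else 0%R.
pose Z0 := Zmat A E G0.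
pose Z1 := Zmat A E G1.
have HY : forall j, j \notin Sk -> Z0 = Z1 -> True by [].
have HZ : forall j i, j \notin Sk -> Z0 i j = Z1 i j.
  move=> j i; rewrite inE => Hj.
  rewrite /Z0 /Z1 /Zmat; f_equal.
  apply: functional_extensionality => i'; apply: functional_extensionality => k'.
  rewrite /Ymat /G0 /G1.
  case Ajk: (A j k') => //.
  case: eqP => [E'|] //=; subst k'; by rewrite Ajk in Hj.
pose M : rmat d P := fun i j => if j \in S1 then Z1 i j else Z0 i j.
pose N1 : rmat d P := fun i j => (M i j - Z0 i j)%R.
pose N2 : rmat d P := fun i j => (M i j - Z1 i j)%R.
have E1 : madd Z0 N1 = M.
  apply: functional_extensionality => i; apply: functional_extensionality => j.
  by rewrite /madd /N1 Rplus_minus.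
have E2 : madd Z1 N2 = M.
  apply: functional_extensionality => i; apply: functional_extensionality => j.
  by rewrite /madd /N2 Rplus_minus.
have A1 : at_most_cols s N1.
  exists S1; split; first by rewrite cS1 geq_minl.
  move=> j Hj i; rewrite /N1 /M (negbTE Hj); exact: Rminus_diag_eq.
have A2 : at_most_cols s N2.
  exists (Sk :\: S1); split.
    rewrite cardsD (setIidPr S1S) cS1. 
    exact (arith_aux _ _ Hlt).
  move=> j Hj i; rewrite /N2 /M.
  case: ifP => HS1; first exact: Rminus_diag_eq.
  apply: Rminus_diag_eq; apply: HZ.
  by move: Hj; rewrite in_setD HS1 /= => /negbTE ->.
have D0 := Htol G0 N1 A1. rewrite E1 in D0.
have D1 := Htol G1 N2 A2. rewrite E2 in D1.
have : colsum G0 i0 = colsum G1 i0 by rewrite -D0 -D1.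
rewrite /colsum /G0 /G1 big1 // (bigD1 k) //= !eqxx /= big1.
  by rewrite Rplus_0_r => H; exact: R1_neq_R0 (esym H).
by move=> j /negbTE ->.
Qed.

Theorem theorem1 (P d s : nat) (hP : 1 <= P) (hd : 1 <= d)
  (A : alloc P) (E : 'I_P -> rmat d P -> rvec d) (D : rmat d P -> rvec d) :
  tolerates A E D s -> (2 * s + 1) * P <= nnz A.
Proof.
move=> Htol.
have -> : nnz A = \sum_(k < P) #|[set j | A j k]|.
  transitivity (\sum_(k < P) \sum_(j < P) (if A j k then 1 else 0)).
    rewrite exchange_big pair_bigA /= /nnz -sum1_card big_mkcond /=.
    by apply: eq_bigr => p _; rewrite inE.
  apply: eq_bigr => k _; rewrite -sum1_card /=.
  by rewrite [RHS]big_mkcond; apply: eq_bigr => j _; rewrite !inE.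
rewrite mulnC -{1}(card_ord P) -sum_nat_const.
apply: leq_sum => k _.
exact: (column_bound _ _ _ hd A E D k Htol).
Qed.
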